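(* Let $D$ be a finite distributive lattice. Suppose that $D$ is fully $\mathrm{A}^{+1}$-representable, that is: for every set $Q$ with $J^+(D)\subseteq Q\subseteq D$ there exist an algebra $A$ and a lattice isomorphism $\phi\colon\mathrm{Con}(A)\to D$ with $\phi(\mathrm{Princ}(A))=Q$. Then $D$ is planar and $D$ has at most one join-reducible coatom.
   Context: For a finite lattice $L$, $J(L)$ denotes the set of nonzero join-irreducible elements of $L$ and $J^+(L)=J(L)\cup\{0_L,1_L\}$. For an algebra $A$, $\mathrm{Con}(A)$ is its congruence lattice and $\mathrm{Princ}(A)$ is the set of its principal congruences $\mathrm{con}(a,b)$, $a,b\in A$ (the least congruence containing $(a,b)$). A lattice is planar if it is finite and has a Hasse diagram drawable in the plane without crossing edges. A coatom is an element covered by $1$; it is join-reducible if it is not join-irreducible. *)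

(* Defs.v *)
From HB Require Import structures.
From mathcomp Require Import all_boot all_order all_algebra.
Set Implicit Arguments. Unset Strict Implicit. Unset Printing Implicit Defensive.
Import Order.TTheory GRing.Theory Num.Theory.

Local Open Scope order_scope.

Section LatticeNotions.
Context {disp : Order.disp_t} {L : finTBLatticeType disp}.

Definition join_irr (x : L) : Prop :=
  x != \bot /\ forall y z : L, x = y `|` z -> x = y \/ x = z.

Definition in_Jplus (x : L) : Prop := join_irr x \/ x = \bot \/ x = \top.

Definition covers (x y : L) : bool :=
  (x < y) && [forall z : L, ~~ ((x < z) && (z < y))].

Definition coatom (x : L) : bool := covers x \top.

Definition join_red (x : L) : Prop := ~ join_irr x.

Local Open Scope ring_scope.

Definition on_segment (p a b : rat * rat) : Prop :=
  exists t : rat, [/\ 0 <= t, t <= 1,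
     p.1 = a.1 + t * (b.1 - a.1) & p.2 = a.2 + t * (b.2 - a.2)].

Definition planar_drawing (pos : L -> rat * rat) : Prop :=
  [/\ injective pos,
      (forall x y : L, covers x y -> (pos x).2 < (pos y).2),
      (forall x y z : L, covers x y -> z != x -> z != y ->
          ~ on_segment (pos z) (pos x) (pos y))
    &
      (forall x1 y1 x2 y2 : L, covers x1 y1 -> covers x2 y2 ->
          (x1, y1) != (x2, y2) ->
          forall p, on_segment p (pos x1) (pos y1) ->
                    on_segment p (pos x2) (pos y2) ->
          exists v : L, [/\ v \in [:: x1; y1], v \in [:: x2; y2] & p = pos v])].

Definition planar : Prop := exists pos : L -> rat * rat, planar_drawing pos.

End LatticeNotions.

Record algebra := Algebra {
  carrier : Type;
  elt0 : carrier;                      (* carrier is nonempty *)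
  opsym : Type;
  arity : opsym -> nat;
  op : forall f : opsym, ('I_(arity f) -> carrier) -> carrier
}.

Definition is_congruence (A : algebra) (R : carrier A -> carrier A -> Prop) : Prop :=
  [/\ (forall x, R x x),
      (forall x y, R x y -> R y x),
      (forall x y z, R x y -> R y z -> R x z)
    & (forall (f : opsym A) (u v : 'I_(arity f) -> carrier A),
         (forall i, R (u i) (v i)) -> R (op u) (op v))].

Definition con (A : algebra) (a b : carrier A) : carrier A -> carrier A -> Prop :=
  fun x y => forall R, is_congruence R -> R a b -> R x y.

(* phi : Con(A) -> D is a lattice isomorphism (equivalently, an order
   isomorphism between the lattices) with phi(Princ(A)) = Q. *)
Definition represents {disp : Order.disp_t} {D : finTBDistrLatticeType disp}
    (A : algebra) (phi : (carrier A -> carrier A -> Prop) -> D) (Q : {set D}) : Prop :=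
  [/\ (forall R S, is_congruence R -> is_congruence S ->
         ((forall x y, R x y -> S x y) <-> (phi R <= phi S)%O)),
      (forall d : D, exists2 R, is_congruence R & phi R = d)
    & (forall d : D, d \in Q <-> exists a b : carrier A, phi (con a b) = d)].

Definition fully_Aplus1_representable {disp : Order.disp_t}
    (D : finTBDistrLatticeType disp) : Prop :=
  forall Q : {set D}, (forall x : D, in_Jplus x -> x \in Q) ->
    exists (A : algebra) (phi : (carrier A -> carrier A -> Prop) -> D),
      represents phi Q.

(* Main.v *)
Require Import Defs.
From HB Require Import structures.
From mathcomp Require Import all_boot all_order all_algebra.
From Stdlib Require Import FunctionalExtensionality Classical.
From mathcomp Require Import lra.
Set Implicit Arguments. Unset Strict Implicit. Unset Printing Implicit Defensive.
Module M_A.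
Import Order.TTheory.
Local Open Scope order_scope.

Section Alg.
Context {disp : Order.disp_t} {D : finTBDistrLatticeType disp}.
Variables (A : algebra) (phi : (carrier A -> carrier A -> Prop) -> D) (Q : {set D}).
Hypothesis H : represents phi Q.

Lemma con_cong (a b : carrier A) : is_congruence (con a b).
Proof.
split.
- by move=> x R [Rr _ _ _] _.
- move=> x y Hxy R HR Rab. case: (HR) => _ Rs _ _. apply: Rs. exact: Hxy R HR Rab.
- move=> x y z H1 H2 R HR Rab. case: (HR) => _ _ Rt _.
  exact: Rt _ _ _ (H1 R HR Rab) (H2 R HR Rab).
- move=> f u v Huv R HR Rab. case: (HR) => _ _ _ Rc. apply: Rc => i.
  exact: Huv i R HR Rab.
Qed.

Lemma ex_cong (d : D) : exists2 R, is_congruence R & phi R = d.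
Proof. by case: H => _ h _; apply: h. Qed.

Lemma con_leP (a b : carrier A) R : is_congruence R ->
  (phi (con a b) <= phi R <-> R a b).
Proof.
move=> HR; case: H => emb _ _; split.
- move=> le; have := (proj2 (emb _ _ (con_cong a b) HR)) le; apply.
  by move=> S _.
- move=> Rab; apply/(emb _ _ (con_cong a b) HR) => x y; exact.
Qed.

Lemma con_refl_le (a : carrier A) (d : D) : phi (con a a) <= d.
Proof.
have [R HR <-] := ex_cong d; apply/con_leP => //.
by case: HR.
Qed.

Lemma con_sym (a b : carrier A) : phi (con a b) = phi (con b a).
Proof.
apply: le_anti; apply/andP; split; apply/con_leP; try exact: con_cong.
- case: (con_cong b a) => _ Hs _ _; apply: Hs; by move=> R _.
- case: (con_cong a b) => _ Hs _ _; apply: Hs; by move=> R _.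
Qed.

Lemma tri (x y z : carrier A) :
  phi (con x z) <= phi (con x y) `|` phi (con y z).
Proof.
have [R HR e] := ex_cong (phi (con x y) `|` phi (con y z)).
rewrite -e; apply/con_leP => //.
case: (HR) => _ _ Rt _; apply: (Rt _ y).
- by apply/con_leP => //; rewrite e leUl.
- by apply/con_leP => //; rewrite e leUr.
Qed.

Lemma con_Q (a b : carrier A) : phi (con a b) \in Q.
Proof. by case: H => _ _ h; apply/h; exists a, b. Qed.

Lemma Q_con (d : D) : d \in Q -> exists a b, phi (con a b) = d.
Proof. by case: H => _ _ h; move/h. Qed.

Lemma step_op (f : opsym A) (w : 'I_(arity f) -> carrier A) (i : 'I_(arity f))
   (z z' : carrier A) (d : D) :
  phi (con z z') <= d ->
  phi (con (op (fun j => if j == i then z else w j))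
           (op (fun j => if j == i then z' else w j))) <= d.
Proof.
have [R HR <-] := ex_cong d; move/(con_leP _ _ HR) => Rz.
apply/con_leP => //; case: (HR) => Rr _ _ Rc; apply: Rc => j.
by case: eqP.
Qed.

Section Reach.
Variable P : D -> Prop.
Definition closedB (B : carrier A -> Prop) :=
  forall z w d, B z -> P d -> phi (con z w) <= d -> B w.
Definition T (x y : carrier A) :=
  forall B, B x -> closedB B -> B y.

Lemma T_step z w d : P d -> phi (con z w) <= d -> T z w.
Proof. by move=> Pd le B Bz cB; apply: cB Bz Pd le. Qed.

Lemma T_trans x y z : T x y -> T y z -> T x z.
Proof. by move=> h1 h2 B Bx cB; apply: h2 (h1 B Bx cB) cB. Qed.

Lemma T_sym x y : T x y -> T y x.
Proof.
move=> h; apply: (h (fun z => T z x)); first by move=> B.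
move=> z w d Tzx Pd le; apply: T_trans Tzx.
by apply: (T_step Pd); rewrite con_sym.
Qed.

Lemma T_single (f : opsym A) (w : 'I_(arity f) -> carrier A) (i : 'I_(arity f)) z z' :
  T z z' -> T (op (fun j => if j == i then z else w j))
              (op (fun j => if j == i then z' else w j)).
Proof.
move=> h; apply: (h (fun y => T (op (fun j => if j == i then z else w j))
                              (op (fun j => if j == i then y else w j)))).
  by move=> B.
move=> y y' d Ty Pd le; apply: T_trans Ty _.
exact: T_step Pd (step_op _ _ le).
Qed.

Lemma T_cong : is_congruence T.
Proof.
split.
- by move=> x B.
- exact: T_sym.
- exact: T_trans.
- move=> f u v Huv.
  pose mix k := fun i : 'I_(arity f) => if (i < k)%N then v i else u i.
  suff K : forall k, T (op u) (op (mix k)).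
    have := K (arity f); congr T; congr op; apply: functional_extensionality.
    by move=> i; rewrite /mix ltn_ord.
  elim=> [|k IH].
    have -> : mix 0%N = u by apply: functional_extensionality.
    by move=> B.
  apply: T_trans IH _.
  case: (ltnP k (arity f)) => hk; last first.
    have -> : mix k.+1 = mix k.
      apply: functional_extensionality => i; rewrite /mix.
      have h1 : (i < k)%N by apply: leq_trans (ltn_ord i) hk.
      by rewrite h1 ltnW.
    by move=> B.
  pose i0 := Ordinal hk.
  have e1 : mix k = (fun j => if j == i0 then u i0 else mix k j).
    apply: functional_extensionality => j; case: eqP => // ->.
    by rewrite /mix /= ltnn.
  have e2 : mix k.+1 = (fun j => if j == i0 then v i0 else mix k j).
    apply: functional_extensionality => j; rewrite /mix ltnS leq_eqVlt.
    have [->|ne] := eqVneq j i0; first by rewrite /= eqxx.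
    have -> : (nat_of_ord j == k) = false.
      by apply/eqP => e; move/eqP: ne; apply; apply: val_inj.
    by [].
  rewrite e1 e2; apply: T_single; exact: Huv.
Qed.

Lemma reach (B : carrier A -> Prop) (a b : carrier A) :
  B a -> closedB B ->
  (forall t : D, (forall d, P d -> d <= t) -> phi (con a b) <= t) -> B b.
Proof.
move=> Ba cB ub.
have Tab : T a b.
  apply (proj1 (con_leP a b (@T_cong))) ; apply: ub => d Pd.
  have [R HR e] := ex_cong d; rewrite -e.
  case: H => emb _ _; apply/(emb _ _ HR T_cong) => x y Rxy.
  apply: (T_step Pd); rewrite -e; exact: (proj2 (con_leP x y HR) Rxy).
exact: Tab B Ba cB.
Qed.
End Reach.
End Alg.

End M_A.
Import M_A.

Module M_B.
Import Order.TTheory.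
Local Open Scope order_scope.

Section Lat.
Context {disp : Order.disp_t} {D : finTBDistrLatticeType disp}.
Implicit Types x y z j : D.

Lemma join_prime j x y : join_irr j -> j <= x `|` y -> j <= x \/ j <= y.
Proof.
move=> [_ hj] le.
have : j = (j `&` x) `|` (j `&` y) by rewrite -meetUr; apply/esym/meet_idPl.
case/hj => e; [left|right]; apply/meet_idPl; exact/esym.
Qed.

Definition jirrb x : bool :=
  (x != \bot) && [forall y, forall z, (x == y `|` z) ==> (x == y) || (x == z)].

Lemma jirrP x : reflect (join_irr x) (jirrb x).
Proof.
apply: (iffP andP) => [[nb /forallP h]|[nb h]]; split => //.
- move=> y z e; have /forallP/(_ z)/implyP := h y.
  by rewrite e eqxx => /(_ isT) /orP [/eqP|/eqP]; [left|right].
- apply/forallP => y; apply/forallP => z; apply/implyP => /eqP /h.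
  by case=> ->; rewrite eqxx ?orbT.
Qed.

Lemma birk x y : (forall j, join_irr j -> j <= y -> j <= x) -> y <= x.
Proof.
move: {2}#|[set z | z < y]| (leqnn #|[set z | z < y]|) => n.
elim: n y => [|n IH] y hn hj.
- have : [set z | z < y] = set0 by apply/eqP; rewrite -cards_eq0 -leqn0.
  move=> e; case: (eqVneq y \bot) => [->|nb]; first exact: le0x.
  have : \bot \in [set z | z < y] by rewrite inE lt_neqAle le0x eq_sym nb.
  by rewrite e inE.
- case: (eqVneq y \bot) => [->|nb]; first exact: le0x.
  case: (classic (join_irr y)) => [jy|njy]; first exact: hj.
  have [u [w [e nu nw]]] : exists u w, [/\ y = u `|` w, y <> u & y <> w].
    apply: NNPP => hn'; apply: njy; split => // u w e.
    apply: NNPP => hc; apply: hn'; exists u, w; split => //.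
      by move=> e'; apply: hc; left.
    by move=> e'; apply: hc; right.
  have lt_of z : y <> z -> z <= y -> (#|[set t | (t < z)%O]| <= n)%N.
    move=> nz le; rewrite -ltnS; apply: leq_trans hn; apply: proper_card.
    apply/properP; split.
      by apply/subsetP => t; rewrite !inE => h; apply: lt_le_trans h le.
    exists z; rewrite !inE ?ltxx //.
    by rewrite lt_neqAle le eq_sym; apply/andP; split => //; apply/eqP.
  have hu : u <= x.
    apply: IH; first by apply: lt_of => //; rewrite e leUl.
    by move=> j jj le; apply: hj => //; rewrite e; apply: le_trans le (leUl _ _).
  have hw : w <= x.
    apply: IH; first by apply: lt_of => //; rewrite e leUr.
    by move=> j jj le; apply: hj => //; rewrite e; apply: le_trans le (leUr _ _).
  by rewrite e leUx hu hw.
Qed.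

Lemma cover_j x y : covers x y ->
  exists j0, [/\ join_irr j0, j0 <= y, ~~ (j0 <= x) &
     forall j, join_irr j -> j <= y -> ~~ (j <= x) -> j = j0].
Proof.
case/andP => lxy /forallP hc.
have key j : join_irr j -> j <= y -> ~~ (j <= x) -> x `|` j = y.
  move=> _ jy jx; apply/eqP; rewrite eq_le leUx (ltW lxy) jy /=.
  have := hc (x `|` j); rewrite negb_and.
  have -> : x < x `|` j by rewrite lt_neqAle leUl andbT; apply: contra jx => /eqP ->; rewrite leUr.
  rewrite /= lt_neqAle negb_and negbK leUx (ltW lxy) jy orbF => /eqP ->; exact: lexx.
have [j0 [jj0 j0y j0x]] : exists j0, [/\ join_irr j0, j0 <= y & ~~ (j0 <= x)].
  apply: NNPP => hn.
  have : y <= x.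
    apply: birk => j jj jy; apply: NNPP => jx; apply: hn; exists j; split => //.
    by apply/negP.
  by move=> yx; have := lt_le_trans lxy yx; rewrite ltxx.
exists j0; split => // j jj jy jx.
have e1 := key _ jj jy jx; have e2 := key _ jj0 j0y j0x.
have h1 : j <= x `|` j0 by rewrite e2.
have h2 : j0 <= x `|` j by rewrite e1.
case: (join_prime jj h1) => [h|h]; first by rewrite h in jx.
case: (join_prime jj0 h2) => [h'|h']; first by rewrite h' in j0x.
by apply: le_anti; rewrite h h'.
Qed.

Lemma coatom_join (c w : D) : coatom c -> ~~ (w <= c) -> c `|` w = \top.
Proof.
case/andP => lc /forallP hc wc.
have := hc (c `|` w); rewrite negb_and.
have -> : c < c `|` w by rewrite lt_neqAle leUl andbT; apply: contra wc => /eqP ->; rewrite leUr.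
by rewrite /= lt_neqAle lex1 andbT negbK => /eqP.
Qed.

Lemma coatom_meet (c1 c2 w : D) : coatom c1 -> w <= c2 -> ~~ (w <= c1) ->
  (c1 `&` c2) `|` w = c2.
Proof.
move=> hc wc2 wc1; have e := coatom_join hc wc1.
have h : c2 `&` (c1 `|` w) = c2 by rewrite e meetx1.
rewrite meetUr in h; rewrite -[RHS]h meetC; congr (_ `|` _).
by apply/esym/meet_idPr.
Qed.
End Lat.

End M_B.
Import M_B.

Module M_C.
Import Order.TTheory.
Local Open Scope order_scope.

Section Main.
Context {disp : Order.disp_t} {D : finTBDistrLatticeType disp}.
Hypothesis HF : fully_Aplus1_representable D.

Lemma width3 (p q r : D) : join_irr p -> join_irr q -> join_irr r ->
  [|| p <= q, q <= p, p <= r, r <= p, q <= r | r <= q].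
Proof.
move=> jp jq jr; apply/negPn/negP; rewrite !negb_or.
move=> /andP [npq /andP [nqp /andP [npr /andP [nrp /andP [nqr nrq]]]]].
pose s := p `|` q `|` r.
have hp : p <= s by exact: le_trans (leUl p q) (leUl _ r).
have hq : q <= s by exact: le_trans (leUr q p) (leUl _ r).
have hr : r <= s by rewrite /s leUr.
have three X Y : X \in [:: p; q; r] -> Y \in [:: p; q; r] -> ~~ (s <= X `|` Y).
  rewrite !inE => hX hY; apply/negP => hs.
  case/or3P: hX => /eqP eX; case/or3P: hY => /eqP eY; subst X Y;
  first [ case: (join_prime jp (le_trans hp hs)) => h; by rewrite ?h in npq npr
        | case: (join_prime jq (le_trans hq hs)) => h; by rewrite ?h in nqp nqr
        | case: (join_prime jr (le_trans hr hs)) => h; by rewrite ?h in nrp nrq ].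
pose Q := [set x : D | jirrb x || (x == \bot) || (x == \top) || (x == s)].
have HQ : forall x, in_Jplus x -> x \in Q.
  move=> x [/jirrP jx|[->|->]]; by rewrite inE ?jx ?eqxx ?orbT.
have [A0 [phi Hr]] := HF HQ.
have [a [b eab]] : exists a b, phi (con a b) = s.
  by apply: (Q_con Hr); rewrite inE eqxx !orbT.
pose P := fun d : D => d = p \/ d = q \/ d = r.
have Pin d : P d -> d \in [:: p; q; r].
  by case=> [->|[->|->]]; rewrite !inE eqxx ?orbT.
have Ps d : P d -> d <= s by case=> [->|[->|->]].
have Bb : phi (con a b) < s.
  apply: (reach Hr (P := P) (B := fun x => phi (con a x) < s)).
  - apply: le_lt_trans (con_refl_le Hr a p) _.
    rewrite lt_neqAle hp andbT; apply/eqP => e.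
    by move: nqp; rewrite e hq.
  - move=> z w d Bz Pd le.
    have h1 := tri Hr a z w.
    have h2 : phi (con a w) <= s.
      apply: le_trans h1 _; rewrite leUx (ltW Bz) /=.
      exact: le_trans le (Ps _ Pd).
    rewrite lt_neqAle h2 andbT; apply/eqP => e.
    have h3 : s <= phi (con a z) `|` d.
      by rewrite -e; apply: le_trans h1 _; apply: leU2.
    move: (con_Q Hr a z); rewrite inE.
    case/orP => [/orP [/orP [/jirrP jL|/eqP eL]|/eqP eL]|/eqP eL].
    + have hL : phi (con a z) <= s := ltW Bz.
      have [X [hX hXl]] : exists X, X \in [:: p; q; r] /\ phi (con a z) <= X.
        rewrite /s in hL.
        case: (join_prime jL hL) => h.
          case: (join_prime jL h) => h'.
            by exists p; rewrite !inE eqxx.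
          by exists q; rewrite !inE eqxx orbT.
        by exists r; rewrite !inE eqxx !orbT.
      have := three X d hX (Pin _ Pd); rewrite (le_trans h3) //.
      exact: leU2.
    + have := three d d (Pin _ Pd) (Pin _ Pd); rewrite joinxx.
      by rewrite eL join0x in h3; rewrite h3.
    + by move: Bz; rewrite eL => /(le_lt_trans (lex1 s)); rewrite ltxx.
    + by move: Bz; rewrite eL ltxx.
  - move=> t ht; rewrite eab /s !leUx ht ?ht //; by [left|right;left|right;right].
by move: Bb; rewrite eab ltxx.
Qed.

Lemma coatom_lt (c : D) : coatom c -> c < \top.
Proof. by case/andP. Qed.

Lemma coatoms_neq_le (c1 c2 : D) : coatom c1 -> coatom c2 -> c1 != c2 -> ~~ (c2 <= c1).
Proof.
move=> h1 /andP [_ /forallP h2] ne; apply/negP => le.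
have := h2 c1; rewrite (coatom_lt h1) andbT lt_neqAle le andbT eq_sym ne.
by [].
Qed.

Lemma coatoms_unique (c1 c2 : D) : coatom c1 -> join_red c1 ->
  coatom c2 -> join_red c2 -> c1 = c2.
Proof.
move=> hc1 jr1 hc2 jr2; apply/eqP; apply/negPn/negP => ne.
pose m := c1 `&` c2.
pose Q := [set x : D | jirrb x || (x == \bot) || (x == \top) || (x == m)].
have HQ : forall x, in_Jplus x -> x \in Q.
  move=> x [/jirrP jx|[->|->]]; by rewrite inE ?jx ?eqxx ?orbT.
have [A0 [phi Hr]] := HF HQ.
have [a [b eab]] : exists a b, phi (con a b) = m.
  by apply: (Q_con Hr); rewrite inE eqxx !orbT.
have step : forall d1 d2 : D, coatom d1 -> coatom d2 -> join_red d2 ->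
   m = d1 `&` d2 -> forall z w, phi (con a z) <= m -> phi (con z w) <= d2 ->
   phi (con a w) <= m.
  move=> d1 d2 hd1 hd2 jd2 em z w Bz le.
  have md1 : m <= d1 by rewrite em leIl.
  have md2 : m <= d2 by rewrite em leIr.
  have h1 : phi (con a w) <= d2.
    apply: le_trans (tri Hr a z w) _; rewrite leUx le andbT.
    exact: le_trans Bz md2.
  rewrite em lexI h1 andbT; apply/negPn/negP => nw1.
  move: (con_Q Hr a w); rewrite inE.
  case/orP => [/orP [/orP [/jirrP jw|/eqP ew]|/eqP ew]|/eqP ew]; last first.
  - by move: nw1; rewrite ew md1.
  - by move: h1; rewrite ew => h; have := lt_le_trans (coatom_lt hd2) h; rewrite ltxx.
  - by move: nw1; rewrite ew le0x.
  set w0 := phi (con a w) in jw nw1 h1.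
  set g := phi (con b w).
  have nwm : ~~ (w0 <= m) by apply: contra nw1 => h; exact: le_trans h md1.
  have hw1 : w0 <= m `|` g by rewrite -eab; exact: (tri Hr a b w).
  have wg : w0 <= g by case: (join_prime jw hw1) => // h; rewrite h in nwm.
  have mg : m <= g.
    have := tri Hr a w b; rewrite eab (con_sym Hr w b) (join_idPr wg).
    by [].
  have gm : g <= m `|` w0 by rewrite -eab (con_sym Hr a b); apply: (tri Hr b a w).
  have e2 : m `|` w0 = d2 by rewrite em; apply: coatom_meet.
  have eg : g = d2.
    apply: le_anti; rewrite -{1}e2 gm /= -e2 leUx mg wg //.
  move: (con_Q Hr b w); rewrite -/g eg inE.
  case/orP => [/orP [/orP [/jirrP j2|/eqP e0]|/eqP e0]|/eqP e0].
  - by apply: jd2.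
  - case: jw => nb _; move/eqP: nb; apply; apply: le_anti; rewrite le0x andbT -e0 -eg; exact: wg.
  - by move: (coatom_lt hd2); rewrite e0 ltxx.
  - by move: nwm; rewrite -e0 -eg wg.
have ntop : c1 `|` c2 = \top by apply: coatom_join; rewrite // coatoms_neq_le.
have Ball : forall y, phi (con a y) <= m.
  move=> y.
  apply: (reach Hr (P := fun d => d = c1 \/ d = c2)
             (B := fun x => phi (con a x) <= m)).
  - exact: (con_refl_le Hr a m).
  - move=> z w d Bz [->|->] le.
    + exact: (step c2 c1 hc2 hc1 jr1 (meetC c1 c2) z w Bz le).
    + exact: (step c1 c2 hc1 hc2 jr2 erefl z w Bz le).
  - move=> t ht; apply: le_trans (lex1 _) _; rewrite -ntop leUx.
    by rewrite !ht; [|right|left].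
have [R HR eR] := ex_cong Hr m.
have [Rt HRt eRt] := ex_cong Hr \top.
have : phi Rt <= phi R.
  case: (Hr) => emb _ _; apply/(emb _ _ HRt HR) => x y _.
  case: (HR) => _ Rs Rtr _.
  have Rx : R a x by apply (proj1 (con_leP Hr a x HR)); rewrite eR; exact: Ball.
  have Ry : R a y by apply (proj1 (con_leP Hr a y HR)); rewrite eR; exact: Ball.
  exact: Rtr _ _ _ (Rs _ _ Rx) Ry.
rewrite eRt eR => h; have h' : \top <= c1 by apply: le_trans h _; exact: leIl.
by have := lt_le_trans (coatom_lt hc1) h'; rewrite ltxx.
Qed.
End Main.

End M_C.
Import M_C.

Module M_E.
Import Order.TTheory.
Local Open Scope order_scope.

Section Dil.
Context {disp : Order.disp_t} {D : finTBDistrLatticeType disp}.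
Implicit Types (S C : {set D}) (x y z : D).

Definition cmp x y := (x <= y) || (y <= x).
Definition chainS C := forall x y, x \in C -> y \in C -> cmp x y.
Definition width2 S := forall x y z, x \in S -> y \in S -> z \in S ->
  [|| cmp x y, cmp y z | cmp x z].

Lemma ex_max S : S != set0 -> exists2 t, t \in S & forall z, z \in S -> t <= z -> z = t.
Proof.
case/set0Pn => x0 Sx0.
case: (arg_minnP (fun x => #|[set z in S | x < z]|) Sx0) => t St ht.
exists t => // z Sz tz; apply/eqP; apply/negPn/negP => nz.
have lt : t < z by rewrite lt_neqAle tz andbT eq_sym.
have := ht z Sz; rewrite leqNgt => /negP; apply; apply: proper_card.
apply/properP; split.
  by apply/subsetP => y; rewrite !inE => /andP [-> h]; exact: lt_trans lt h.
by exists z; rewrite !inE ?Sz ?lt ?ltxx.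
Qed.

Lemma ex_min S : S != set0 -> exists2 t, t \in S & forall z, z \in S -> z <= t -> z = t.
Proof.
case/set0Pn => x0 Sx0.
case: (arg_minnP (fun x => #|[set z in S | z < x]|) Sx0) => t St ht.
exists t => // z Sz tz; apply/eqP; apply/negPn/negP => nz.
have lt : z < t by rewrite lt_neqAle tz andbT.
have := ht z Sz; rewrite leqNgt => /negP; apply; apply: proper_card.
apply/properP; split.
  by apply/subsetP => y; rewrite !inE => /andP [-> h]; exact: lt_trans h lt.
by exists z; rewrite !inE ?Sz ?lt ?ltxx.
Qed.

Lemma orient X C1 C2 a1 a2 : chainS C1 -> chainS C2 -> X = C1 :|: C2 ->
  a1 \in X -> a2 \in X -> ~~ cmp a1 a2 ->
  exists E1, exists E2, [/\ X = E1 :|: E2, chainS E1, chainS E2, a1 \in E1 & a2 \in E2].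
Proof.
move=> h1 h2 eX X1 X2 nc; move: (X1) (X2); rewrite eX !inE.
case/orP=> i1; case/orP=> i2.
- by move: nc; rewrite h1.
- by exists C1, C2.
- by exists C2, C1; rewrite setUC.
- by move: nc; rewrite h2.
Qed.

Lemma below_of (x a a' : D) : (x <= a) || (x <= a') -> cmp x a -> ~~ cmp a a' -> x <= a.
Proof.
case/orP => // h; case/orP => // ax; rewrite /cmp (le_trans ax h) //.
Qed.

Lemma above_of (x a a' : D) : (a <= x) || (a' <= x) -> cmp x a -> ~~ cmp a a' -> a <= x.
Proof.
case/orP => // h; case/orP => // xa; rewrite /cmp (le_trans h xa) orbT //.
Qed.

Lemma dilworth2 S : width2 S ->
  exists C1, exists C2, [/\ S = C1 :|: C2, chainS C1 & chainS C2].
Proof.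
move: {2}#|S| (leqnn #|S|) => n; elim: n S => [|n IH] S hn w.
  have -> : S = set0 by apply/eqP; rewrite -cards_eq0 -leqn0.
  by exists set0, set0; split; [rewrite setU0|move=> x y; rewrite inE..].
case: (eqVneq S set0) => [->|nS].
  by exists set0, set0; split; [rewrite setU0|move=> x y; rewrite inE..].
have [t St tmax] := ex_max nS.
have nS' : [set z in S | z <= t] != set0.
  by apply/set0Pn; exists t; rewrite inE St lexx.
have [b] := ex_min nS'; rewrite inE => /andP [Sb bt] bmin'.
have bmin z : z \in S -> z <= b -> z = b.
  by move=> Sz zb; apply: bmin' => //; rewrite inE Sz (le_trans zb bt).
case: (classic (chainS (S :\: [set b; t]))) => [ch|nch].
  exists [set b; t], (S :\: [set b; t]); split => //.
  - apply/setP => x; rewrite !inE; case: (eqVneq x b) => [->|] //=.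
    by case: (eqVneq x t) => [->|] //=; rewrite orbF.
  - move=> x y; rewrite !inE => /orP [] /eqP -> /orP [] /eqP ->;
      by rewrite /cmp ?lexx ?bt ?orbT.
have [a1 [a2 [i1 i2 nc]]] : exists a1 a2, [/\ a1 \in S :\: [set b; t],
    a2 \in S :\: [set b; t] & ~~ cmp a1 a2].
  apply: NNPP => hn'; apply: nch => x y hx hy; apply/negPn/negP => nc.
  by apply: hn'; exists x, y.
move: i1 i2; rewrite !inE !negb_or => /andP [/andP [a1b a1t] Sa1] /andP [/andP [a2b a2t] Sa2].
have nc' : ~~ cmp a2 a1 by rewrite /cmp orbC.
pose Sm := [set x in S | (x <= a1) || (x <= a2)].
pose Sp := [set x in S | (a1 <= x) || (a2 <= x)].
have subm : Sm \subset S by apply/subsetP => x; rewrite inE => /andP [].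
have subp : Sp \subset S by apply/subsetP => x; rewrite inE => /andP [].
have wsub S' : S' \subset S -> width2 S'.
  move=> sub x y z hx hy hz; apply: w; exact: (subsetP sub).
have cm : (#|Sm| <= n)%N.
  rewrite -ltnS; apply: leq_trans hn; apply: proper_card; apply/properP.
  split => //; exists t => //; rewrite inE St /= negb_or.
  apply/andP; split; apply/negP => h.
    by move: a1t; rewrite (tmax _ Sa1 h) eqxx.
  by move: a2t; rewrite (tmax _ Sa2 h) eqxx.
have cp : (#|Sp| <= n)%N.
  rewrite -ltnS; apply: leq_trans hn; apply: proper_card; apply/properP.
  split => //; exists b => //; rewrite inE Sb /= negb_or.
  apply/andP; split; apply/negP => h.
    by move: a1b; rewrite (bmin _ Sa1 h) eqxx.
  by move: a2b; rewrite (bmin _ Sa2 h) eqxx.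
have [D1 [D2 [eD hD1 hD2]]] := IH _ cm (wsub _ subm).
have [U1 [U2 [eU hU1 hU2]]] := IH _ cp (wsub _ subp).
have a1m : a1 \in Sm by rewrite inE Sa1 lexx.
have a2m : a2 \in Sm by rewrite inE Sa2 lexx orbT.
have a1p : a1 \in Sp by rewrite inE Sa1 lexx.
have a2p : a2 \in Sp by rewrite inE Sa2 lexx orbT.
have [E1 [E2 [eE hE1 hE2 e1 e2]]] := orient hD1 hD2 eD a1m a2m nc.
have [F1 [F2 [eF hF1 hF2 f1 f2]]] := orient hU1 hU2 eU a1p a2p nc.
have Em x : x \in E1 :|: E2 -> x \in Sm by rewrite -eE.
have Fp x : x \in F1 :|: F2 -> x \in Sp by rewrite -eF.
have lowE1 x : x \in E1 -> x <= a1.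
  move=> xE; have := Em x; rewrite inE xE => /(_ isT); rewrite inE => /andP [_].
  move=> h; exact: below_of h (hE1 _ _ xE e1) nc.
have lowE2 x : x \in E2 -> x <= a2.
  move=> xE; have := Em x; rewrite inE xE orbT => /(_ isT); rewrite inE => /andP [_].
  move=> h; apply: (below_of (a' := a1)); [by rewrite orbC | exact: (hE2 _ _ xE e2) | exact: nc'].
have upF1 x : x \in F1 -> a1 <= x.
  move=> xE; have := Fp x; rewrite inE xE => /(_ isT); rewrite inE => /andP [_].
  move=> h; exact: above_of h (hF1 _ _ xE f1) nc.
have upF2 x : x \in F2 -> a2 <= x.
  move=> xE; have := Fp x; rewrite inE xE orbT => /(_ isT); rewrite inE => /andP [_].
  rewrite orbC => h; exact: above_of h (hF2 _ _ xE f2) nc'.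
have glue (E F : {set D}) a : chainS E -> chainS F -> (forall x, x \in E -> x <= a) ->
    (forall x, x \in F -> a <= x) -> chainS (E :|: F).
  move=> cE cF lE uF x y; rewrite !inE => /orP [hx|hx] /orP [hy|hy].
  - exact: cE.
  - by rewrite /cmp (le_trans (lE _ hx) (uF _ hy)).
  - by rewrite /cmp (le_trans (lE _ hy) (uF _ hx)) orbT.
  - exact: cF.
exists (E1 :|: F1), (E2 :|: F2); split.
- apply/setP => x; apply/idP/idP => [Sx|].
    have := w _ _ _ Sx Sa1 Sa2; rewrite (negbTE nc) /= => /orP [] /orP [] h.
    + have : x \in Sm by rewrite inE Sx h.
      by rewrite eE !inE => /orP [] ->; rewrite ?orbT.
    + have : x \in Sp by rewrite inE Sx h.
      by rewrite eF !inE => /orP [] ->; rewrite ?orbT.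
    + have : x \in Sm by rewrite inE Sx h orbT.
      by rewrite eE !inE => /orP [] ->; rewrite ?orbT.
    + have : x \in Sp by rewrite inE Sx h orbT.
      by rewrite eF !inE => /orP [] ->; rewrite ?orbT.
  rewrite !inE => /orP [] /orP [] h.
  + by move: (Em x); rewrite inE h => /(_ isT); rewrite inE => /andP [].
  + by move: (Fp x); rewrite inE h => /(_ isT); rewrite inE => /andP [].
  + by move: (Em x); rewrite inE h orbT => /(_ isT); rewrite inE => /andP [].
  + by move: (Fp x); rewrite inE h orbT => /(_ isT); rewrite inE => /andP [].
- exact: glue hE1 hF1 lowE1 upF1.
- exact: glue hE2 hF2 lowE2 upF2.
Qed.

End Dil.

End M_E.
Import M_E.

Module M_G.
Import Order.TTheory GRing.Theory Num.Theory.
Local Open Scope ring_scope.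

Definition gp (X Y : nat) : rat * rat := (X%:R, Y%:R).

Lemma nat_close (a b : nat) :
  (a%:R - b%:R : rat) < 1 -> (b%:R - a%:R : rat) < 1 -> a = b.
Proof.
move=> h1 h2; case: (ltngtP a b) => // h.
- have h3 : (a%:R : rat) + 1 <= b%:R by rewrite natr1 ler_nat.
  clear h; exfalso; lra.
- have h3 : (b%:R : rat) + 1 <= a%:R by rewrite natr1 ler_nat.
  clear h; exfalso; lra.
Qed.

Lemma nat_close1 (a b : nat) :
  (a%:R - b%:R : rat) <= 1 -> (b%:R - a%:R : rat) <= 1 ->
  [\/ a = b, a = b.+1 | b = a.+1].
Proof.
move=> h1 h2; case: (ltngtP a b) => h; last by constructor 1.
- case: (ltngtP a.+1 b) => h'; last by constructor 3.
  + have h3 : (a%:R : rat) + 1 + 1 <= b%:R by rewrite !natr1 ler_nat.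
    clear h h'; exfalso; lra.
  + by move: h'; rewrite ltnS leqNgt h.
- case: (ltngtP b.+1 a) => h'; last by constructor 2.
  + have h3 : (b%:R : rat) + 1 + 1 <= a%:R by rewrite !natr1 ler_nat.
    clear h h'; exfalso; lra.
  + by move: h'; rewrite ltnS leqNgt h.
Qed.

Lemma seg_param X Y e p : (e <= 1)%N ->
  on_segment p (gp X Y) (gp (X + e) Y.+1) ->
  exists t : rat, [/\ 0 <= t, t <= 1, p.1 = X%:R + t * e%:R & p.2 = Y%:R + t].
Proof.
move=> he [t [t0 t1 e1 e2]]; exists t; split => //.
- by rewrite e1 /gp /= natrD addrAC subrr add0r.
- by rewrite e2 /gp /= -natr1 addrAC subrr add0r mulr1.
Qed.

Lemma gpI X Y X' Y' : gp X Y = gp X' Y' -> X = X' /\ Y = Y'.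
Proof.
by case => /eqP h1 /eqP h2; move: h1 h2; rewrite !eqr_nat => /eqP -> /eqP ->.
Qed.

Lemma vert X Y e X' Y' : (e <= 1)%N ->
  on_segment (gp X' Y') (gp X Y) (gp (X + e) Y.+1) ->
  gp X' Y' = gp X Y \/ gp X' Y' = gp (X + e) Y.+1.
Proof.
move=> he /(seg_param he) [t [t0 t1 e1 e2]]; move: e1 e2 => /= e1 e2.
have : [\/ Y' = Y, Y' = Y.+1 | Y = Y'.+1].
  apply: nat_close1; rewrite e2; lra.
case=> eY.
- have t00 : t = 0 by move: e2; rewrite eY => e2; lra.
  by left; rewrite /gp e1 eY t00 mul0r addr0.
- have t11 : t = 1 by move: e2; rewrite eY -natr1 => e2; lra.
  by right; rewrite /gp e1 eY t11 mul1r natrD.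
- by move: e2; rewrite eY -natr1 => e2; clear he; exfalso; lra.
Qed.

Lemma e01 (e : nat) : (e <= 1)%N -> e = 0%N \/ e = 1%N.
Proof. by case: e => [|[|]] //; [left|right]. Qed.

Lemma meet2 X1 Y1 e1 X2 Y2 e2 p : (e1 <= 1)%N -> (e2 <= 1)%N ->
  on_segment p (gp X1 Y1) (gp (X1 + e1) Y1.+1) ->
  on_segment p (gp X2 Y2) (gp (X2 + e2) Y2.+1) ->
  (X1 = X2 /\ Y1 = Y2 /\ e1 = e2) \/
  ((p = gp X1 Y1 \/ p = gp (X1 + e1) Y1.+1) /\ (p = gp X2 Y2 \/ p = gp (X2 + e2) Y2.+1)).
Proof.
move=> he1 he2 /(seg_param he1) [t [t0 t1 f1 f2]] /(seg_param he2) [s [s0 s1 g1 g2]].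
case: p f1 f2 g1 g2 => [p1 p2] /= f1 f2 g1 g2.
have : [\/ Y1 = Y2, Y1 = Y2.+1 | Y2 = Y1.+1].
  apply: nat_close1; lra.
rewrite /gp !natrD -!natr1.
case=> eY.
- subst Y1.
  have ts : t = s by lra.
  subst s.
  have [t00|tn0] := eqVneq t 0.
    right; subst t; rewrite !mul0r !addr0 in f1 g1; split; left; congr pair; lra.
  have [t11|tn1] := eqVneq t 1.
    right; subst t; rewrite !mul1r in f1 g1; split; right; congr pair; lra.
  have tp : 0 < t by rewrite lt_neqAle eq_sym tn0 t0.
  have tl : t < 1 by rewrite lt_neqAle tn1 t1.
  case: (e01 he1) => E1; case: (e01 he2) => E2; subst e1 e2.
  + left; split; last by [].
    apply: nat_close; rewrite !mulr0 in f1 g1; lra.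
  + have : X1 = X2.
      apply: nat_close; rewrite mulr0 mulr1 in f1 g1; lra.
    move=> eX; subst X2; rewrite mulr0 mulr1 in f1 g1; exfalso; lra.
  + have : X1 = X2.
      apply: nat_close; rewrite mulr0 mulr1 in f1 g1; lra.
    move=> eX; subst X2; rewrite mulr0 mulr1 in f1 g1; exfalso; lra.
  + left; split; last by [].
    apply: nat_close; rewrite !mulr1 in f1 g1; lra.
- subst Y1; rewrite -natr1 in f2.
  have t0' : t = 0 by lra.
  have s1' : s = 1 by lra.
  subst t s; right; rewrite mul0r addr0 in f1; rewrite mul1r in g1; split; [left|right];
    congr pair; lra.
- subst Y2; rewrite -natr1 in g2.
  have t1' : t = 1 by lra.
  have s0' : s = 0 by lra.
  subst t s; right; rewrite mul1r in f1; rewrite mul0r addr0 in g1; split; [right|left];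
    congr pair; lra.
Qed.

End M_G.
Import M_G.

Module M_F.
Import Order.TTheory.
Local Open Scope order_scope.

Section Draw.
Context {disp : Order.disp_t} {D : finTBDistrLatticeType disp}.

Definition dset (K : {set D}) (x : D) := [set j in K | j <= x].

Lemma chain_dset (K : {set D}) (x y : D) : chainS K -> #|dset K x| = #|dset K y| -> dset K x = dset K y.
Proof.
move=> ch ec.
case: (boolP (dset K x \subset dset K y)) => sub.
  by apply/eqP; rewrite eqEcard sub ec leqnn.
have [u ux uy] := subsetPn sub.
apply/esym/eqP; rewrite eqEcard ec leqnn andbT.
apply/subsetP => v vy; apply/negPn/negP => vx.
move: ux uy vy vx; rewrite !inE => /andP [Ku hu] /nandP uy /andP [Kv hv] /nandP vx.
case: uy => [/negP //|uy]; case: vx => [/negP //|vx].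
case/orP: (ch _ _ Ku Kv) => h.
- by move: uy; rewrite (le_trans h hv).
- by move: vx; rewrite (le_trans h hu).
Qed.

Lemma dset_cover (K : {set D}) (x y j0 : D) : covers x y ->
  (forall j, j \in K -> join_irr j) ->
  join_irr j0 -> j0 <= y -> ~~ (j0 <= x) ->
  (forall j, join_irr j -> j <= y -> ~~ (j <= x) -> j = j0) ->
  #|dset K y| = (#|dset K x| + (j0 \in K))%N.
Proof.
move=> /andP [lxy _] hK jj0 j0y j0x uniq.
have xy := ltW lxy.
case: (boolP (j0 \in K)) => Kj0.
- have -> : dset K y = j0 |: dset K x.
    rewrite /dset; apply/setP => j; rewrite !inE; case: (eqVneq j j0) => [->|ne] /=.
      by rewrite Kj0 j0y.
    case: (boolP (j \in K)) => //= Kj.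
    case: (boolP (j <= x)) => jx; first by rewrite (le_trans jx xy).
    by apply/negP => jy; move: ne; rewrite (uniq _ (hK _ Kj) jy jx) eqxx.
  by rewrite cardsU1 inE (negbTE j0x) andbF addnC.
- rewrite addn0 /dset; apply: eq_card => j; rewrite !inE.
  case: (boolP (j \in K)) => //= Kj.
  case: (boolP (j <= x)) => jx; first by rewrite (le_trans jx xy).
  apply/negP => jy; move: Kj0; by rewrite -(uniq _ (hK _ Kj) jy jx) Kj.
Qed.
End Draw.

End M_F.
Import M_F.

Import Order.TTheory.
Local Open Scope order_scope.

Theorem theorem1p3 (disp : Order.disp_t) (D : finTBDistrLatticeType disp) :
  fully_Aplus1_representable D ->
  planar (L := D) /\
  (forall a b : D, coatom a -> join_red a -> coatom b -> join_red b -> a = b).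
Proof.
move=> HF; split; last by move=> a b; apply: (coatoms_unique HF).
pose J := [set x : D | jirrb x].
have wJ : width2 J.
  move=> x y z; rewrite !inE => /jirrP jx /jirrP jy /jirrP jz.
  have := width3 HF jx jy jz; rewrite /cmp.
  by case: (x <= y); case: (y <= x); case: (x <= z); case: (z <= x);
     case: (y <= z); case: (z <= y).
have [C1 [C2 [eJ ch1 ch2]]] := dilworth2 wJ.
pose K1 := C1; pose K2 := C2 :\: C1.
have ch2' : chainS K2.
  by move=> x y; rewrite !inE => /andP [_ hx] /andP [_ hy]; apply: ch2.
have inJ j : join_irr j -> (j \in K1) || (j \in K2).
  move=> jj; have : j \in J by rewrite inE; apply/jirrP.
  by rewrite eJ !inE; case: (j \in C1).
have Jin j : (j \in K1) || (j \in K2) -> join_irr j.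
  move=> h; apply/jirrP; have : j \in J.
    by rewrite eJ !inE; move: h; rewrite !inE; case: (j \in C1).
  by rewrite inE.
have hK1 j : j \in K1 -> join_irr j by move=> h; apply: Jin; rewrite h.
have hK2 j : j \in K2 -> join_irr j by move=> h; apply: Jin; rewrite h orbT.
pose al x := #|dset K1 x|.
pose be x := #|dset K2 x|.
pose pos x := gp (al x) (al x + be x).
have cov x y : covers x y ->
    exists e, (e <= 1)%N /\ pos y = gp (al x + e) (al x + be x).+1.
  move=> cxy; have [j0 [jj0 j0y j0x uniq]] := cover_j cxy.
  have ea := dset_cover cxy hK1 jj0 j0y j0x uniq.
  have eb := dset_cover cxy hK2 jj0 j0y j0x uniq.
  exists (j0 \in K1); split; first by case: (j0 \in K1).
  rewrite /pos /al /be ea eb; congr gp.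
  have := inJ _ jj0; rewrite /K2 /K1 !inE.
  by case: (j0 \in C1); case: (j0 \in C2) => //= _; rewrite ?addn0 ?addn1 ?addnS.
have posI : injective pos.
  move=> x y /gpI [e1 e2].
  have e3 : be x = be y by move: e2; rewrite e1 => /addnI.
  have d1 := chain_dset ch1 e1; have d2 := chain_dset ch2' e3.
  have same j : join_irr j -> (j <= x) = (j <= y).
    move=> jj; case/orP: (inJ _ jj) => h.
      have : (j \in dset K1 x) = (j \in dset K1 y) by rewrite d1.
      by rewrite /dset !in_set h.
    have : (j \in dset K2 x) = (j \in dset K2 y) by rewrite d2.
    rewrite /dset !in_set; move: h; rewrite /K2 inE => /andP [-> ->] /=; exact.
  apply: le_anti; apply/andP; split; apply: birk => j jj h.
  - by rewrite -(same _ jj).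
  - by rewrite (same _ jj).
exists pos; split.
- exact: posI.
- move=> x y /cov [e [_ ->]]; rewrite /pos /gp /=.
  by rewrite Num.Theory.ltr_nat.
- move=> x y z /cov [e [he ey]] zx zy; rewrite ey => /vert - /(_ he) [] h.
  + by move/eqP: zx; apply; apply: posI.
  + by move/eqP: zy; apply; apply: posI; rewrite ey.
- move=> x1 y1 x2 y2 /cov [e1 [he1 ey1]] /cov [e2 [he2 ey2]] ne p.
  rewrite ey1 ey2 => s1 s2.
  case: (meet2 he1 he2 s1 s2) => [[eX [eY ee]]|[h1 h2]].
    have ex : x1 = x2 by apply: posI; rewrite /pos eY eX.
    have ey : y1 = y2 by apply: posI; rewrite ey1 ey2 eY eX ee.
    by move: ne; rewrite ex ey eqxx.
  have fin v1 v2 : v1 \in [:: x1; y1] -> v2 \in [:: x2; y2] -> p = pos v1 -> p = pos v2 ->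
      exists v, [/\ v \in [:: x1; y1], v \in [:: x2; y2] & p = pos v].
    move=> i1 i2 f1 f2; exists v1; split => //.
    by have -> : v1 = v2 by apply: posI; rewrite -f1 -f2.
  case: h1 => h1; case: h2 => h2.
  + by apply: (fin x1 x2); rewrite ?inE ?eqxx ?orbT.
  + by apply: (fin x1 y2); rewrite ?inE ?eqxx ?orbT ?ey2.
  + by apply: (fin y1 x2); rewrite ?inE ?eqxx ?orbT ?ey1.
  + by apply: (fin y1 y2); rewrite ?inE ?eqxx ?orbT ?ey1 ?ey2.
Qed.
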